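(* Suppose $0<\eta<\omega_1$ and $\mathcal{F}_1,\mathcal{F}_2,\dots$ are regular families containing all singletons with $CB(\mathcal{F}_j)<\omega^\eta$ for each $j$. Fix a sequence of positive numbers $(\varpi_n)_{n=1}^\infty$ converging to $0$. Let $Z_0$ be the completion of $c_{00}$ with respect to the norm $[x]_0=\sup\{\varpi_j\|Ex\|_{\ell_1}:j\in\mathbb{N},E\in\mathcal{F}_j\}$. Then the canonical basis of $Z_0$ is $\eta$-weakly null.
   Context: For $E\subset\mathbb{N}$ and $x=\sum a_ne_n\in c_{00}$, $Ex=\sum_{n\in E}a_ne_n$. A family $\mathcal{F}$ of finite subsets of $\mathbb{N}$ is regular if it is hereditary (closed under subsets), spreading (if $(m_i)_{i=1}^k\in\mathcal{F}$ in increasing order and $n_1<\dots<n_k$ with $m_i\leqslant n_i$, then $(n_i)_{i=1}^k\in\mathcal{F}$) and compact in $2^{\mathbb{N}}\cong\{0,1\}^{\mathbb{N}}$. $CB(\mathcal{F})$ is the Cantor–Bendixson index: $\mathcal{F}'$ removes maximal members, iterate transfinitely (intersections at limits), $CB(\mathcal{F})$ is the least $\xi$ with $\mathcal{F}^\xi=\varnothing$. Schreier families: $\mathcal{S}_0=\{\varnothing\}\cup\{\{n\}\}$; $\mathcal{S}=\{\varnothing\}\cup\{E:|E|\leqslant\min E\}$; $\mathcal{G}[\mathcal{F}]=\{\varnothing\}\cup\{\bigcup_{i=1}^nE_i:\varnothing\neq E_i\in\mathcal{F},\max E_i<\min E_{i+1},(\min E_i)\in\mathcal{G}\}$; $\mathcal{S}_{\xi+1}=\mathcal{S}[\mathcal{S}_\xi]$;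 for limit $\xi$, with fixed $\xi_n\uparrow\xi$, $\mathcal{S}_{\xi_n+1}\subset\mathcal{S}_{\xi_{n+1}}$, $\mathcal{S}_\xi=\{\varnothing\}\cup\{E\neq\varnothing:E\in\mathcal{S}_{\xi_{\min E}+1}\}$. For $\xi<\omega_1$, a bounded sequence $(x_n)$ is an $\ell_1^\xi+$-spreading model if $\inf\{\|x\|:F\in\mathcal{S}_\xi,x\in\mathrm{co}(x_n:n\in F)\}>0$; it is $\xi$-weakly null if no subsequence is an $\ell_1^\xi+$-spreading model. *)

(* Defs.v *)
From HB Require Import structures.
From mathcomp Require Import all_boot all_order all_algebra.
From mathcomp Require Import all_classical all_reals all_analysis.
Set Implicit Arguments. Unset Strict Implicit. Unset Printing Implicit Defensive.
Import Order.TTheory GRing.Theory Num.Theory.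
Local Open Scope ring_scope.
Local Open Scope classical_set_scope.

(* Countable ordinals as Brouwer trees (every tree denotes a countable
   ordinal and every countable ordinal is denoted by some tree);
   OL f denotes sup_n (f n).                                          *)
Inductive ord : Type :=
| OZ : ord
| OS : ord -> ord
| OL : (nat -> ord) -> ord.

(* The (exact) order on the denoted ordinals. *)
Inductive ord_le : ord -> ord -> Prop :=
| ord_leZ : forall b, ord_le OZ b
| ord_leSS : forall a b, ord_le a b -> ord_le (OS a) (OS b)
| ord_leSr : forall a b, ord_le a b -> ord_le a (OS b)
| ord_leLl : forall f b, (forall n, ord_le (f n) b) -> ord_le (OL f) b
| ord_leLr : forall a f n, ord_le a (f n) -> ord_le a (OL f).

Definition ord_lt (a b : ord) : Prop := ord_le (OS a) b.
Definition ord_eq (a b : ord) : Prop := ord_le a b /\ ord_le b a.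
Definition ord_is_limit (a : ord) : Prop :=
  ~ ord_eq a OZ /\ forall b, ~ ord_eq a (OS b).

Fixpoint ord_add (a b : ord) : ord :=
  match b with
  | OZ => a
  | OS b' => OS (ord_add a b')
  | OL f => OL (fun n => ord_add a (f n))
  end.

Fixpoint ord_mul (a b : ord) : ord :=
  match b with
  | OZ => OZ
  | OS b' => ord_add (ord_mul a b') a
  | OL f => OL (fun n => ord_mul a (f n))
  end.

Fixpoint ord_exp (a b : ord) : ord :=
  match b with
  | OZ => OS OZ
  | OS b' => ord_mul (ord_exp a b') a
  | OL f => OL (fun n => ord_exp a (f n))
  end.

Fixpoint ord_of_nat (n : nat) : ord :=
  match n with O => OZ | S k => OS (ord_of_nat k) end.

Definition ord_omega : ord := OL ord_of_nat.

(* CONVENTION: the paper's N = {1,2,...}; the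
   natural number k : nat stands for the paper's k+1.  A finite subset
   is represented by its strictly increasing enumeration (seq nat).   *)
Definition is_set (E : seq nat) : Prop := sorted ltn E.

Definition family := seq nat -> Prop.

Definition hereditary (F : family) : Prop :=
  forall E G, F E -> is_set G -> subseq G E -> F G.

Definition spreading (F : family) : Prop :=
  forall E G, F E -> is_set G -> size G = size E ->
    (forall i, (i < size E)%N -> (nth 0 E i <= nth 0 G i)%N) -> F G.

(* compact (equivalently closed) in 2^N = {0,1}^N with the product
   topology, identifying a set with its indicator function. *)
Definition compact_family (F : family) : Prop :=
  forall x : nat -> bool,
    (forall n, exists E, F E /\ forall i, (i < n)%N -> (i \in E) = x i) ->
    exists E, F E /\ forall i, (i \in E) = x i.

Definition regular (F : family) : Prop :=
  [/\ forall E, F E -> is_set E, hereditary F, spreading F & compact_family F].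

Definition derived (F : family) : family :=
  fun E => F E /\ exists G, F G /\ subseq E G /\ E <> G.

Fixpoint CB_deriv (F : family) (a : ord) : family :=
  match a with
  | OZ => F
  | OS b => derived (CB_deriv F b)
  | OL f => fun E => forall n, CB_deriv F (f n) E
  end.

(* CB(F) < a  iff  F^b = empty for some b < a  (CB(F) is the least such b) *)
Definition CB_lt (F : family) (a : ord) : Prop :=
  exists b, ord_lt b a /\ forall E, ~ CB_deriv F b E.

Definition S0 : family := fun E => is_set E /\ (size E <= 1)%N.

(* S = {empty} u {E : |E| <= min E}; min E is (head 0 E) + 1 in the paper *)
Definition Schreier : family :=
  fun E => is_set E /\ (E = [::] \/ (size E <= (head 0 E).+1)%N).

Definition comb (G F : family) : family :=
  fun E => E = [::] \/
    (is_set E /\ exists Es : seq (seq nat),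
       [/\ Es <> [::], E = flatten Es,
           (forall A, A \in Es -> A <> [::] /\ F A),
           (forall i, (i.+1 < size Es)%N ->
              (last 0 (nth [::] Es i) < head 0 (nth [::] Es i.+1))%N)
         & G (map (head 0) Es)]).

(* (sq, S) is a system of Schreier families S_xi, xi < omega_1, built with
   the choice of sequences sq xi n  (n : nat stands for paper's n+1)
   increasing to xi at limit ordinals xi. *)
Definition Schreier_system (sq : ord -> nat -> ord) (S : ord -> family) : Prop :=
  [/\ (forall a b, ord_eq a b -> forall E, S a E <-> S b E),
      (forall E, S OZ E <-> S0 E),
      (forall a E, S (OS a) E <-> comb Schreier (S a) E)
    & (forall a, ord_is_limit a ->
        [/\ forall n, ord_lt (sq a n) (sq a n.+1),
            ord_eq (OL (sq a)) a,
            (forall n E, S (OS (sq a n)) E -> S (sq a n.+1) E)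
          & forall E, S a E <-> (E = [::] \/ (E <> [::] /\ S (OS (sq a (head 0 E))) E))])].

(* Vectors of c00 as functions nat -> R (finitely supported ones).    *)
Section Vectors.
Variable R : realType.

Definition basis_vec (n : nat) : nat -> R := fun i => if i == n then 1 else 0.

Definition Z0norm (w : nat -> R) (Fs : nat -> family) (x : nat -> R) : R :=
  sup [set r | exists j E, Fs j E /\ r = w j * \sum_(i <- E) `|x i|].

Definition co (xs : nat -> nat -> R) (F : seq nat) : set (nat -> R) :=
  [set y | exists a : nat -> R,
     [/\ forall k, k \in F -> 0 <= a k, \sum_(k <- F) a k = 1
       & y = fun i => \sum_(k <- F) a k * xs k i]].

Definition bounded_seq (nrm : (nat -> R) -> R) (xs : nat -> nat -> R) : Prop :=
  exists M, forall n, nrm (xs n) <= M.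

Definition l1_spreading_model (nrm : (nat -> R) -> R) (xs : nat -> nat -> R)
  (Sxi : family) : Prop :=
  0 < inf [set r | exists F y, [/\ Sxi F, co xs F y & r = nrm y]].

Definition weakly_null_wrt (nrm : (nat -> R) -> R) (xs : nat -> nat -> R)
  (Sxi : family) : Prop :=
  bounded_seq nrm xs /\
  forall m : nat -> nat, (forall k, (m k < m k.+1)%N) ->
    ~ l1_spreading_model nrm (fun k => xs (m k)) Sxi.

End Vectors.

(* Main.v *)
From HB Require Import structures.
From mathcomp Require Import all_boot all_order all_algebra.
From mathcomp Require Import all_classical all_reals all_analysis.
From mathcomp Require Import ring lra.
From Stdlib Require List.
Require Import Defs.
Import Order.TTheory GRing.Theory Num.Theory.
Set Implicit Arguments. Unset Strict Implicit. Unset Printing Implicit Defensive.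

Lemma ord_le_refl a : ord_le a a.
Proof.
elim: a => [|a IH|f IH]; [exact: ord_leZ | exact: ord_leSS | ].
apply: ord_leLl => n; apply: ord_leLr; exact: IH.
Qed.

Lemma ord_le_S a : ord_le a (OS a).
Proof. apply: ord_leSr; exact: ord_le_refl. Qed.

Lemma ord_le_OZ_inv a : ord_le a OZ -> forall c, ord_le a c.
Proof.
move=> H; remember OZ as z eqn:Ez; elim: H Ez => //.
- move=> b _ c; exact: ord_leZ.
- move=> f b _ IH Eb c; apply: ord_leLl => n; exact: IH.
Qed.

Lemma ord_le_OS_inv b c : ord_le (OS b) c -> ord_le b c.
Proof.
elim: c => [|c IH|k IH] H.
- inversion H.
- inversion H; subst; apply: ord_leSr => //; exact: IH.
- inversion H; subst; eapply ord_leLr; apply: IH; eassumption.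
Qed.

Lemma ord_le_OL_inv h c : ord_le (OL h) c -> forall n, ord_le (h n) c.
Proof.
elim: c => [|c IH|k IH] H n.
- inversion H; subst; auto.
- inversion H; subst; first [by auto | apply: ord_leSr; by apply: IH].
- inversion H; subst; first [by auto | match goal with Hx : ord_le (OL h) (k ?m) |- _ => apply: (@ord_leLr _ _ m); exact: IH Hx n end].
Qed.

Lemma ord_le_SS_aux a' b' (IH : forall c, ord_le b' c -> ord_le a' c) c :
  ord_le (OS b') c -> ord_le (OS a') c.
Proof.
elim: c => [|c IHc|k IHk] H.
- inversion H.
- inversion H; subst; [apply: ord_leSS; exact: IH| apply: ord_leSr; exact: IHc].
- inversion H; subst; eapply ord_leLr; apply: IHk; eassumption.
Qed.

Lemma ord_le_trans a b c : ord_le a b -> ord_le b c -> ord_le a c.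
Proof.
move=> H; elim: H c => {a b}.
- move=> b c _; exact: ord_leZ.
- move=> a b _ IH c; exact: ord_le_SS_aux.
- move=> a b _ IH c H2; apply: IH; exact: ord_le_OS_inv.
- move=> f b _ IH c H2; apply: ord_leLl => n; exact: IH.
- move=> a f n _ IH c H2; apply: IH; exact: ord_le_OL_inv.
Qed.

Lemma ord_lt_le a b : ord_lt a b -> ord_le a b.
Proof. move=> H; exact: ord_le_OS_inv. Qed.

Lemma ord_lt_le_trans a b c : ord_lt a b -> ord_le b c -> ord_lt a c.
Proof. rewrite /ord_lt => H1 H2; exact: ord_le_trans H1 H2. Qed.

Lemma ord_le_lt_trans a b c : ord_le a b -> ord_lt b c -> ord_lt a c.
Proof. rewrite /ord_lt => H1 H2; apply: ord_le_trans H2; exact: ord_leSS. Qed.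

Lemma ord_lt_trans a b c : ord_lt a b -> ord_lt b c -> ord_lt a c.
Proof. move=> H1 H2; apply: ord_lt_le_trans H1 _; exact: ord_lt_le. Qed.

Lemma ord_lt_irr_OZ a : ~ ord_lt a OZ.
Proof. move=> H; inversion H. Qed.

Lemma ord_SS_inv a b : ord_le (OS a) (OS b) -> ord_le a b.
Proof. move=> H; inversion H; subst => //; exact: ord_le_OS_inv. Qed.

Lemma ord_lt_OL_inv a f : ord_lt a (OL f) -> exists n, ord_lt a (f n).
Proof. move=> H; inversion H; subst; by exists n. Qed.

Lemma ord_wf : well_founded ord_lt.
Proof.
have key : forall t s, ord_le s t -> Acc ord_lt s.
  elim=> [|t IH|g IH] s Hs; constructor => u Hu.
  - have := ord_le_trans Hu Hs => H; inversion H.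
  - have := ord_le_trans Hu Hs => /ord_SS_inv H; exact: IH.
  - have := ord_le_trans Hu Hs => H; inversion H; subst.
    apply: (IH n); exact: ord_le_OS_inv.
by move=> a; apply: (key a); exact: ord_le_refl.
Qed.

Lemma ord_le_ext a b : (forall c, ord_lt c a -> ord_lt c b) -> ord_le a b.
Proof.
elim: a b => [|a IH|f IH] b H.
- exact: ord_leZ.
- apply: H; exact: ord_le_refl.
- apply: ord_leLl => n; apply: IH => c Hc; apply: H.
  exact: ord_leLr Hc.
Qed.

Lemma ord_total a b : ord_le a b \/ ord_lt b a.
Proof.
elim/(well_founded_ind ord_wf): a b => a IHa b.
elim/(well_founded_ind ord_wf): b => b IHb.
case: (EM (ord_lt b a)) => [|nba]; first by right.
left; apply: ord_le_ext => c ca.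
case: (IHa c ca b) => [cb|bc]; last by exfalso; apply: nba; exact: ord_lt_trans bc ca.
case: (EM (ord_lt c b)) => // ncb; exfalso.
have bc : ord_le b c.
  apply: ord_le_ext => d db.
  case: (IHb d db) => [ad|da].
  + by exfalso; apply: ncb; apply: ord_lt_trans ca (ord_le_lt_trans ad db).
  + case: (IHa c ca d) => [cd|//].
    by exfalso; apply: ncb; apply: ord_le_lt_trans cd db.
by apply: nba; apply: ord_le_lt_trans bc ca.
Qed.

Lemma add_le_r a c : ord_le a (ord_add a c).
Proof.
elim: c => [|c IH|f IH] /=; first exact: ord_le_refl.
- exact: ord_leSr.
- exact: (@ord_leLr _ _ 0).
Qed.

Lemma add_mono_r a b c : ord_le b c -> ord_le (ord_add a b) (ord_add a c).
Proof.
move=> H; elim: H => {b c} /=.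
- move=> b; exact: add_le_r.
- move=> b c _ IH; exact: ord_leSS.
- move=> b c _ IH; exact: ord_leSr.
- move=> f b _ IH; exact: ord_leLl.
- move=> b f n _ IH; exact: ord_leLr IH.
Qed.

Lemma add_mono_l x y a : ord_le x y -> ord_le (ord_add x a) (ord_add y a).
Proof.
move=> H; elim: a => [|a IH|f IH] //=; first exact: ord_leSS.
apply: ord_leLl => n; apply: (@ord_leLr _ _ n); exact: IH.
Qed.

Lemma le_add_l x y : ord_le x (ord_add y x).
Proof.
elim: x => [|x IH|f IH] /=; first exact: ord_leZ.
- exact: ord_leSS.
- apply: ord_leLl => n; apply: (@ord_leLr _ _ n); exact: IH.
Qed.

Lemma mul_mono_r a b c : ord_le b c -> ord_le (ord_mul a b) (ord_mul a c).
Proof.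
move=> H; elim: H => {b c} /=.
- move=> b; exact: ord_leZ.
- move=> b c _ IH; exact: add_mono_l.
- move=> b c _ IH; apply: ord_le_trans IH _; exact: add_le_r.
- move=> f b _ IH; exact: ord_leLl.
- move=> b f n _ IH; exact: ord_leLr IH.
Qed.

Lemma mul_mono_l x y a : ord_le x y -> ord_le (ord_mul x a) (ord_mul y a).
Proof.
move=> H; elim: a => [|a IH|f IH] /=; first exact: ord_leZ.
- apply: ord_le_trans (add_mono_l _ IH) _; exact: add_mono_r.
- apply: ord_leLl => n; apply: (@ord_leLr _ _ n); exact: IH.
Qed.

Lemma le_mul_omega x : ord_le x (ord_mul x ord_omega).
Proof. apply: (@ord_leLr _ _ 1) => /=; exact: le_add_l. Qed.

Lemma one_le_exp c : ord_le (OS OZ) (ord_exp ord_omega c).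
Proof.
elim: c => [|c IH|f IH] /=; first exact: ord_le_refl.
- apply: ord_le_trans IH _; exact: le_mul_omega.
- exact: (@ord_leLr _ _ 0).
Qed.

Lemma exp_mono b c : ord_le b c -> ord_le (ord_exp ord_omega b) (ord_exp ord_omega c).
Proof.
move=> H; elim: H => {b c} /=.
- move=> b; exact: one_le_exp.
- move=> b c _ IH; exact: (@mul_mono_l _ _ ord_omega IH).
- move=> b c _ IH; apply: ord_le_trans IH _; exact: (le_mul_omega (ord_exp ord_omega c)).
- move=> f b _ IH; exact: ord_leLl.
- move=> b f n _ IH; exact: ord_leLr IH.
Qed.

Lemma derived_mono (X Y : family) E : (forall E, X E -> Y E) -> derived X E -> derived Y E.
Proof. move=> XY [XE [G [XG [sEG nEG]]]]; split; first exact: XY; exists G; auto. Qed.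

Lemma CB_fam_mono (X Y : family) a E : (forall E, X E -> Y E) ->
  CB_deriv X a E -> CB_deriv Y a E.
Proof.
elim: a E => [|a IH|f IH] E XY /=; first exact: XY.
- apply: derived_mono => E'; exact: IH.
- move=> H n; exact: IH.
Qed.

Lemma CB_sub (G : family) a E : CB_deriv G a E -> G E.
Proof.
elim: a E => [|a IH|f IH] E //=.
- by move=> [/IH].
- by move=> /(_ 0) /IH.
Qed.

Lemma CB_anti (G : family) a b E : ord_le a b -> CB_deriv G b E -> CB_deriv G a E.
Proof.
move=> H; elim: H E => {a b} /=.
- move=> b E; exact: CB_sub.
- move=> a b _ IH E; apply: derived_mono; exact: IH.
- move=> a b _ IH E [H _]; exact: IH.
- move=> f b _ IH E H n; exact: IH.
- move=> a f n _ IH E H; exact: IH.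
Qed.

Lemma CB_add (G : family) a b : CB_deriv G (ord_add a b) = CB_deriv (CB_deriv G a) b.
Proof.
elim: b => [|b IH|f IH] //=; first by rewrite IH.
apply/funext => E; rewrite propeqE; split => H n; [rewrite -IH; exact: H | rewrite IH; exact: H].
Qed.

Definition fam_ok (G : family) := (forall E, G E -> is_set E) /\ hereditary G.

Lemma derived_ok G : fam_ok G -> fam_ok (derived G).
Proof.
move=> [GS GH]; split; first by move=> E [/GS].
move=> E E' [GE [H [GHH [sEH nEH]]]] sE' sE'E; split; first exact: GH sE' sE'E.
exists H; split => //; split; first exact: subseq_trans sE'E sEH.
move=> eE'H; subst E'.
have := size_subseq_leqif sE'E; have := size_subseq_leqif sEH.
move=> [l1 e1] [l2 e2].
have : size E = size H by apply/eqP; rewrite eqn_leq l1 l2.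
move=> es; apply: nEH; apply/eqP; rewrite -e1 es //.
Qed.

Lemma CB_ok G a : fam_ok G -> fam_ok (CB_deriv G a).
Proof.
elim: a G => [|a IH|f IH] G H //=.
- apply: derived_ok; exact: IH.
- have Hn := fun n => IH n G H.
  split; first by move=> E /(_ 0) /(proj1 (Hn 0)).
  move=> E E' HE sE' sE'E n; exact: (proj2 (Hn n)) (HE n) sE' sE'E.
Qed.

Lemma ok_empty G : fam_ok G -> (exists E, G E) -> G [::].
Proof. move=> [GS GH] [E GE]; apply: GH GE _ _ => //; exact: sub0seq. Qed.

Section SMono.
Variables (sq : ord -> nat -> ord) (S : ord -> seq nat -> Prop).
Hypothesis HS : Schreier_system sq S.

Lemma S_single c E : is_set E -> E <> [::] -> S c E -> S (OS c) E.
Proof.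
case: HS => _ _ Hsucc _ sE nE ScE; apply/Hsucc; right; split => //.
exists [:: E]; split.
- by [].
- by rewrite /= cats0.
- by move=> A; rewrite inE => /eqP ->.
- by move=> i.
- by split; [rewrite /is_set | right].
Qed.

Lemma ord_eq_sym a b : ord_eq a b -> ord_eq b a.
Proof. by case. Qed.

Lemma ord_classify b : ord_eq b OZ \/ (exists c, ord_eq b (OS c)) \/ ord_is_limit b.
Proof.
case: (EM (ord_eq b OZ)) => [|h0]; first by left.
case: (EM (exists c, ord_eq b (OS c))) => [|hs]; first by right; left.
right; right; split => // c hc; apply: hs; by exists c.
Qed.

Lemma S_mono b : forall a, ord_le a b -> exists N, forall E, is_set E -> E <> [::] ->
  (N <= head 0 E)%N -> S a E -> S b E.
Proof.
case: HS => Heq _ _ Hlim.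
elim/(well_founded_ind ord_wf): b => b IH a ab.
case: (ord_total b a) => [ba|ab'].
  exists 0%N => E _ _ _; exact: (proj1 (Heq a b (conj ab ba) E)).
case: (ord_classify b) => [[b0 _]|[[c [bc cb]]|blim]].
- by exfalso; apply: (@ord_lt_irr_OZ a); apply: ord_lt_le_trans ab' b0.
- have ac : ord_le a c by apply: ord_SS_inv; apply: ord_le_trans ab' bc.
  have [N HN] := IH c cb a ac.
  exists N => E sE nE hE SaE; apply: (proj1 (Heq (OS c) b (conj cb bc) E)).
  apply: S_single => //; exact: HN.
- have [inc [eqs1 eqs2] chain char] := Hlim b blim.
  have [n0 hn0] : exists n, ord_lt a (sq b n).
    apply: ord_lt_OL_inv; exact: ord_lt_le_trans ab' eqs2.
  have lt0 : ord_lt (sq b n0) b.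
    apply: ord_lt_le_trans (inc n0) _; apply: ord_le_trans eqs1.
    apply: (@ord_leLr _ _ n0.+1); exact: ord_le_refl.
  have [N1 HN1] := IH _ lt0 a (ord_lt_le hn0).
  have ch : forall m E, is_set E -> E <> [::] -> (n0 <= m)%N ->
       S (sq b n0) E -> S (OS (sq b m)) E.
    elim=> [|m IHm] E sE nE; first by rewrite leqn0 => /eqP <-; exact: S_single.
    rewrite leq_eqVlt => /orP [/eqP <-|]; first exact: S_single.
    rewrite ltnS => hm H; apply: S_single => //; apply: chain; exact: IHm.
  exists (maxn N1 n0) => E sE nE; rewrite geq_max => /andP [h1 h2] SaE.
  apply/char; right; split => //; apply: ch => //; exact: HN1.
Qed.

End SMono.

Fixpoint subs (s : seq nat) : seq (seq nat) :=
  match s with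
  | [::] => [:: [::]]
  | x :: s' => List.map (cons x) (subs s') ++ subs s'
  end.

Lemma In_subs s P : subseq P s -> List.In P (subs s).
Proof.
elim: s P => [|x s IH] P /=.
  by case: P => [|y P] //= _; left.
case: P => [|y P] H; apply/List.in_or_app.
- right; apply: IH; exact: sub0seq.
- move: H => /=; case: eqP => [-> H|_ H].
  + left; apply/List.in_map; exact: IH.
  + right; exact: IH.
Qed.

Lemma filter_split (E : seq nat) t t' : sorted ltn E -> (t <= t')%N ->
  [seq x <- E | (x <= t)%N] ++ [seq x <- E | (t < x <= t')%N] = [seq x <- E | (x <= t')%N].
Proof.
elim: E => [|x E IH] //= sE tt.
have sE' : sorted ltn E := path_sorted sE.
have allx : all (fun y => x < y)%N E := order_path_min ltn_trans sE.
case: (leqP x t) => xt /=.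
- by rewrite (leq_trans xt tt) /= (IH sE' tt) ?ltnNge ?xt.
- have -> : [seq y <- E | (y <= t)%N] = [::].
    apply/eqP; rewrite -[_ == _]negbK -has_filter; apply/hasPn => y yE.
    move/allP: allx => /(_ y yE) xy; rewrite -ltnNge; exact: ltn_trans xt xy.
  rewrite /=; case: (x <= t')%N; [congr cons|];
  apply: eq_in_filter => y yE; move/allP: allx => /(_ y yE) xy;
  by rewrite (ltn_trans xt xy).
Qed.

Lemma sorted_bounds (s : seq nat) x : sorted ltn s -> x \in s ->
  (head 0 s <= x <= last 0 s)%N.
Proof.
case: s => [|a s] //= sS; rewrite inE => /orP [/eqP ->|xs].
- rewrite leqnn /=; elim: s a sS => [|b s IH] a //= /andP [ab pb].
  apply: leq_trans (ltnW ab) _; exact: IH.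
- have := order_path_min ltn_trans sS => /allP /(_ x xs) ax; rewrite (ltnW ax) /=.
  elim: s a sS xs {ax} => [|b s IH] a //= /andP [ab pb]; rewrite inE => /orP [/eqP ->|xs].
  + clear IH; elim: s b pb {ab} => [|c s IH] b //= /andP [bc pc]; apply: leq_trans (ltnW bc) _; exact: IH.
  + exact: IH.
Qed.

Lemma sorted_cat (A B : seq nat) : sorted ltn A -> sorted ltn B -> A <> [::] -> B <> [::] ->
  (last 0 A < head 0 B)%N -> sorted ltn (A ++ B).
Proof.
case: A => [|a A] // sA; case: B => [|b B] // sB _ _ /= lt.
rewrite cat_path; apply/andP; split => //=; by rewrite lt.
Qed.

Definition ext (H : family) (P : seq nat) (t : nat) (bad : Prop) : family :=
  fun F => [/\ ~ bad, is_set F, is_set (P ++ F), all (fun x => t < x)%N F & H (P ++ F)].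

Lemma ext_ok H P t bad : fam_ok H -> fam_ok (ext H P t bad).
Proof.
move=> [HS HH]; split; first by move=> F [].
move=> F F' [nb sF sPF aF HPF] sF' sub.
have sPF' : is_set (P ++ F') := subseq_sorted ltn_trans (cat_subseq (subseq_refl P) sub) sPF.
split => //.
- apply/allP => x xF'; move/allP: aF; apply; exact: (mem_subseq sub).
- apply: HH HPF sPF' _; apply: cat_subseq => //; exact: subseq_refl.
Qed.

Lemma ext_CB H P t bad a F : CB_deriv (ext H P t bad) a F -> ~ bad /\ CB_deriv H a (P ++ F).
Proof.
elim: a F => [|a IH|f IH] F /=.
- by move=> [].
- move=> [/IH [nb HF] [F' [/IH [_ HF'] [sub ne]]]]; split => //; split => //.
  exists (P ++ F'); split => //; split; first by apply: cat_subseq => //; exact: subseq_refl.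
  by move=> /eqP; rewrite eqseq_cat // eqxx /= => /eqP.
- move=> H'; split; first by case: (IH (0%N) F (H' 0%N)).
  move=> n; by case: (IH n F (H' n)).
Qed.

Local Open Scope ring_scope.

Lemma list_common (I : Type) (le : I -> I -> Prop) (i0 : I)
  (tot : forall x y, le x y \/ le y x) (Q : family -> I -> Prop)
  (mono : forall G x y, le x y -> Q G x -> Q G y) (Gs : seq family) :
  (forall G, List.In G Gs -> exists x, Q G x) -> exists x, forall G, List.In G Gs -> Q G x.
Proof.
elim: Gs => [|G Gs IH] H; first by exists i0.
have [x Hx] := H G (or_introl erefl).
have [y Hy] := IH (fun G' h => H G' (or_intror h)).
case: (tot x y) => xy.
- exists y => G' [<-|h]; [exact: mono xy Hx | exact: Hy].
- exists x => G' [<-|h]; [exact: Hx | exact: mono xy (Hy _ h)].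
Qed.

Section Main.
Variable R : realType.
Variables (sq : ord -> nat -> ord) (S : ord -> seq nat -> Prop).
Hypothesis HS : Schreier_system sq S.

Definition mu (L : seq (nat * R)) (E : seq nat) : R := \sum_(p <- L | p.1 \in E) p.2.

Definition avg (X : family) (N0 : nat) (L : seq (nat * R)) : Prop :=
  [/\ X (map fst L), is_set (map fst L), map fst L <> [::], (N0 <= head 0 (map fst L))%N &
      (all (fun p => 0 <= p.2) L /\ \sum_(p <- L) p.2 = 1)].

Definition Pprop (eta : ord) := forall Gs : seq family,
  (forall G, List.In G Gs -> fam_ok G) ->
  (forall G, List.In G Gs -> forall E, ~ CB_deriv G (ord_exp ord_omega eta) E) ->
  forall delta : R, 0 < delta -> forall N0 : nat,
  exists L, avg (S eta) N0 L /\ forall G, List.In G Gs -> forall E, G E -> mu L E <= delta.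

Lemma empty_of_nil G a : fam_ok G -> ~ CB_deriv G a [::] -> forall E, ~ CB_deriv G a E.
Proof.
move=> ok n0 E HE; apply: n0; apply: ok_empty; last by exists E.
exact: CB_ok.
Qed.

Lemma P_zero : Pprop OZ.
Proof.
move=> Gs ok cb delta dpos N0; exists [:: (N0, 1)]; split.
  split.
  - case: HS => _ H0 _ _; apply/H0; by split.
  - by [].
  - by [].
  - by [].
  - by rewrite /= big_seq1 ler01.
move=> G inG E GE.
have -> : E = [::].
  case: E GE => // x E GE; exfalso; apply: (cb G inG [::]) => /=.
  split; first by apply: (ok_empty (ok G inG)); exists (x :: E).
  exists (x :: E); split; first by [].
  split; first exact: sub0seq.
  by [].
by rewrite /mu big_cons big_nil in_nil ltW.
Qed.

Lemma P_lim f : (forall n, Pprop (f n)) -> Pprop (OL f).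
Proof.
move=> IH Gs ok cb delta dpos N0.
have ex : forall G, List.In G Gs -> exists n, forall E, ~ CB_deriv G (ord_exp ord_omega (f n)) E.
  move=> G inG; case: (EM (exists n, ~ CB_deriv G (ord_exp ord_omega (f n)) [::])).
  - move=> [n hn]; exists n; exact: empty_of_nil (ok G inG) hn.
  - move=> hn; exfalso; apply: (cb G inG [::]) => /= n.
    case: (EM (CB_deriv G (ord_exp ord_omega (f n)) [::])) => // h; exfalso; apply: hn; by exists n.
have [m Hm] := list_common 0%N (fun x y => match ord_total (f x) (f y) with or_introl h => or_introl h | or_intror h => or_intror (ord_lt_le h) end)
   (fun G x y (xy : ord_le (f x) (f y)) (h : forall E, ~ CB_deriv G (ord_exp ord_omega (f x)) E) E he =>
        h E (CB_anti (exp_mono xy) he)) ex.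
have [N HN] := S_mono HS (@ord_leLr (f m) f m (ord_le_refl (f m))).
have [L [[SL sL nL hL [pL sumL]] smL]] := IH m Gs ok Hm delta dpos (maxn N0 N).
exists L; split => //; split => //.
- apply: HN => //; apply: leq_trans hL; exact: leq_maxr.
- apply: leq_trans hL; exact: leq_maxl.
Qed.

End Main.

Section Reals.
Variable R : realType.

Lemma mu_cons (p : nat * R) L E : mu (p :: L) E = (if p.1 \in E then p.2 else 0) + mu L E.
Proof. by rewrite /mu big_cons; case: ifP => _ //; rewrite add0r. Qed.

Lemma mu_bounds (L : seq (nat * R)) E : all (fun p => 0 <= p.2) L ->
  0 <= mu L E <= \sum_(p <- L) p.2.
Proof.
elim: L => [|p L IH] /=; first by rewrite /mu !big_nil lexx.
move=> /andP [p0 /IH /andP [h1 h2]]; rewrite mu_cons big_cons.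
case: ifP => _; apply/andP; split; lra.
Qed.

Lemma sum_bad (f : nat -> R) d s : 0 <= d -> (forall i, 0 <= f i <= 1) ->
  \sum_(i <- s) f i <= (count (fun i => d < f i) s)%:R + (size s)%:R * d.
Proof.
move=> d0 hf; elim: s => [|i s IH] /=; first by rewrite big_nil mul0r addr0.
rewrite big_cons -addn1 natrD; have /andP [f0 f1] := hf i.
case: ltrP => h /=; rewrite ?natrD; lra.
Qed.

End Reals.

Lemma sorted_flat (g : nat -> seq nat) a n : (forall i, sorted ltn (g i)) ->
  (forall i, g i <> [::]) -> (forall i, (last 0 (g i) < head 0 (g i.+1))%N) ->
  sorted ltn (flatten [seq g i | i <- iota a n]) /\
  (n > 0 -> head 0 (flatten [seq g i | i <- iota a n]) = head 0 (g a))%N.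
Proof.
move=> hs hn hl; elim: n a => [|n IH] a //=.
have [IH1 IH2] := IH a.+1; split; last by case: (g a) (hn a).
case: n IH IH1 IH2 => [|n] IH IH1 IH2 /=; first by rewrite cats0.
apply: sorted_cat => //=.
- by case: (g a.+1) (hn a.+1).
- by rewrite (IH2 erefl).
Qed.

Lemma In_mem (T : eqType) (x : T) s : List.In x s <-> x \in s.
Proof.
elim: s => [|y s IH] //=; rewrite inE; split.
- by move=> [->|/IH ->]; rewrite ?eqxx ?orbT.
- by case/orP => [/eqP ->|/IH]; [left|right].
Qed.

Lemma head_in (s : seq nat) : s <> [::] -> head 0 s \in s.
Proof. by case: s => // x s _; exact: mem_head. Qed.

Section Succ.
Variable R : realType.
Variables (sq : ord -> nat -> ord) (S : ord -> seq nat -> Prop).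
Hypothesis HS : Schreier_system sq S.

Lemma P_succ z : @Pprop R S z -> @Pprop R S (OS z).
Proof.
move=> IH Gs ok cb delta dpos N0.
pose w := ord_exp ord_omega z.
pose D := fun (G : family) (k : nat) => CB_deriv G (ord_mul w (ord_of_nat k)).
have DS : forall G k, D G k.+1 = CB_deriv (D G k) w by move=> G k; rewrite /D /= CB_add.
have Dok : forall G k, fam_ok G -> fam_ok (D G k) by move=> G k; exact: CB_ok.
have Danti : forall G k E, D G k.+1 E -> D G k E by move=> G k E; rewrite DS; exact: CB_sub.
have Danti' : forall G k l E, (k <= l)%N -> D G l E -> D G k E.
  move=> G k l E; elim: l => [|l IHl]; first by rewrite leqn0 => /eqP ->.
  rewrite leq_eqVlt => /orP [/eqP -> //|]; rewrite ltnS => kl h; apply: IHl kl _; exact: Danti.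
have ex : forall G, List.In G Gs -> exists n, forall E, ~ D G n E.
  move=> G inG; case: (EM (exists n, ~ D G n [::])).
  - move=> [n hn]; exists n; exact: empty_of_nil (ok G inG) hn.
  - move=> hn; exfalso; apply: (cb G inG [::]) => n.
    case: (EM (D G n [::])) => // h; exfalso; apply: hn; by exists n.
have [K HK] := list_common 0%N (fun x y => elimT orP (leq_total x y))
   (fun G x y (xy : (x <= y)%N) (h : forall E, ~ D G x E) E he => h E (Danti' G x y E xy he)) ex.

pose d2 := delta / 2.
have d2pos : 0 < d2 by rewrite /d2; lra.
pose N := (Num.bound (K%:R / d2)).+1.
have Npos : (0 < N)%N by [].
have HN : K%:R / N%:R <= d2.
  have hb := archi_boundP (x := K%:R / d2) (divr_ge0 (ler0n _ _) (ltW d2pos)).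
  have Nr : (Num.bound (K%:R / d2))%:R <= (N%:R : R) by rewrite ler_nat.
  have Npr : (0 : R) < N%:R by rewrite ltr0n.
  rewrite ler_pdivrMr // -ler_pdivrMl // mulrC.
  apply: ltW; exact: lt_le_trans hb Nr.
pose Ls := fun t => List.flat_map (fun G => List.flat_map (fun P =>
   List.map (fun k => ext (D G k) P t (D G k.+1 P)) (iota 0 K.+1)) (subs (iota 0 t.+1))) Gs.
have Lin : forall t X, List.In X (Ls t) -> exists G P k,
    [/\ List.In G Gs, (k <= K)%N & X = ext (D G k) P t (D G k.+1 P)].
  move=> t X /List.in_flat_map [G [inG /List.in_flat_map [P [_ /List.in_map_iff [k [<- kin]]]]]].
  exists G, P, k; split => //; move/In_mem: kin; rewrite mem_iota add0n ltnS; by case/andP.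
have Lmem : forall t G P k, List.In G Gs -> subseq P (iota 0 t.+1) -> (k <= K)%N ->
    List.In (ext (D G k) P t (D G k.+1 P)) (Ls t).
  move=> t G P k inG sP kK; apply/List.in_flat_map; exists G; split => //.
  apply/List.in_flat_map; exists P; split; first exact: In_subs.
  apply/List.in_map_iff; exists k; split => //; apply/In_mem; by rewrite mem_iota add0n ltnS kK.
have blk : forall t, exists L, avg (S z) t.+1 L /\
    forall X, List.In X (Ls t) -> forall F, X F -> mu L F <= d2.
  move=> t; apply: IH => //.
  - move=> X /Lin [G [P [k [inG _ ->]]]]; apply: ext_ok; apply: Dok; exact: ok.
  - move=> X /Lin [G [P [k [inG _ ->]]]] F /ext_CB [nb].
    rewrite -DS => h; apply: nb.
    have [sD hD] := Dok G k.+1 (ok G inG).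
    have sPF := sD _ h.
    apply: hD h _ (prefix_subseq P F).
    exact: (subseq_sorted ltn_trans (prefix_subseq P F) sPF).
case: (choice blk) => B HB.
pose T := fun i => iter i (fun t => last 0 (map fst (B t))) (maxn N0 N).
pose Bl := fun i => B (T i).
have TS : forall i, T i.+1 = last 0 (map fst (Bl i)) by [].
have Bavg : forall i, avg (S z) (T i).+1 (Bl i) by move=> i; case: (HB (T i)).
have keys : forall i x, x \in map fst (Bl i) -> (T i < x <= T i.+1)%N.
  move=> i x xin; have [_ sB _ hB _] := Bavg i.
  have /andP [h1 h2] := sorted_bounds sB xin.
  apply/andP; split; [exact: leq_trans hB h1 | exact: h2].
have Tlt : forall i, (T i < T i.+1)%N.
  move=> i; have [_ _ nB _ _] := Bavg i.
  have /andP [a b] := keys i _ (head_in nB); exact: leq_trans a b.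
have Nsmall : forall i X, List.In X (Ls (T i)) -> forall F, X F -> mu (Bl i) F <= d2.
  by move=> i; case: (HB (T i)).

pose g := fun i => map fst (Bl i).
have gs : forall i, sorted ltn (g i) by move=> i; case: (Bavg i).
have gn : forall i, g i <> [::] by move=> i; case: (Bavg i).
have gh : forall i, ((T i).+1 <= head 0 (g i))%N by move=> i; case: (Bavg i).
have gl : forall i, (last 0 (g i) < head 0 (g i.+1))%N by move=> i; exact: gh i.+1.
pose sc := fun (L : seq (nat * R)) => [seq (p.1, p.2 / N%:R) | p <- L].
pose Lf := flatten [seq sc (Bl i) | i <- iota 0 N].
have mapLf : map fst Lf = flatten [seq g i | i <- iota 0 N].
  rewrite /Lf; elim: (iota 0 N) => [|i s IHs] //=; rewrite map_cat IHs; congr cat.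
  by rewrite /sc -map_comp.
have [sLf hLf] := sorted_flat 0 N gs gn gl.
have T0 : (N <= T 0)%N by rewrite /T /= leq_maxr.
have T0' : (N0 <= T 0)%N by rewrite /T /= leq_maxl.
exists Lf; split.
  split.
  - case: HS => _ _ Hsucc _; apply/Hsucc; right; split; first by rewrite mapLf.
    exists [seq g i | i <- iota 0 N]; split.
    + by rewrite /N /=.
    + exact: mapLf.
    + move=> A /mapP [i _ ->]; split; first exact: gn.
      by case: (Bavg i).
    + move=> i; rewrite size_map size_iota => iN.
      rewrite (nth_map 0%N) ?size_iota; last exact: ltnW.
      rewrite (nth_map 0%N) ?size_iota // !nth_iota //; last exact: ltnW.
    + split.
      * rewrite /is_set -map_comp sorted_map; apply: sub_sorted (iota_ltn_sorted 0 N).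
        move=> i j /= ij; apply: (homo_ltn (f := fun i => head 0 (g i)) ltn_trans) => // k.
        have /andP [_ hl] := sorted_bounds (gs k) (head_in (gn k)).
        exact: leq_ltn_trans hl (gl k).
      * right; rewrite !size_map size_iota.
        have -> : head 0 [seq head 0 i | i <- [seq g i | i <- iota 0 N]] = head 0 (g 0) by [].
        apply: leq_trans T0 _; apply: leq_trans (ltnW (gh 0)) _; exact: leqnSn.
  - by rewrite mapLf.
  - by rewrite mapLf /N /= ; case: (g 0) (gn 0).
  - rewrite mapLf (hLf erefl); apply: leq_trans (gh 0); exact: leq_trans T0' (leqnSn _).
  - have Npr : (0 : R) < N%:R by rewrite ltr0n.
    split.
    + apply/allP => p /flattenP [s' /mapP [i _ ->] /mapP [q qB ->]] /=.
      have [_ _ _ _ [/allP aB _]] := Bavg i.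
      apply: divr_ge0; [exact: aB | exact: ltW].
      rewrite /Lf big_flatten big_map.
      rewrite (eq_bigr (fun _ => 1 / N%:R)); last first.
        move=> i _; rewrite /sc big_map /= -mulr_suml.
        by have [_ _ _ _ [_ ->]] := Bavg i.
      have -> : iota 0 N = index_iota 0 N by rewrite /index_iota subn0.
      rewrite sumr_const_nat subn0.
      have -> : (1 / N%:R) *+ N = N%:R * (1 / N%:R) :> R by rewrite mulr_natl.
      rewrite mul1r mulfV //.
      exact: lt0r_neq0.
move=> G inG E GE.
have [sG hG] := ok G inG.
have sE : sorted ltn E := sG E GE.
pose P := fun i => [seq x <- E | (x <= T i)%N].
pose seg := fun i => [seq x <- E | (T i < x <= T i.+1)%N].
have Pstep : forall i, P i.+1 = P i ++ seg i.
  move=> i; exact: esym (filter_split sE (ltnW (Tlt i))).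
have Pset : forall i, is_set (P i) by move=> i; exact: (sorted_filter ltn_trans _ sE).
have PG : forall i, G (P i) by move=> i; exact: hG E (P i) GE (Pset i) (filter_subseq _ _).
have Pher : forall j i, D G j (P i.+1) -> D G j (P i).
  move=> j i h; have [_ hD] := Dok G j (ok G inG).
  apply: hD h (Pset i) _; rewrite Pstep; exact: prefix_subseq.
have Piota : forall i, subseq (P i) (iota 0 (T i).+1).
  move=> i; have -> : P i = [seq x <- iota 0 (T i).+1 | x \in E].
    apply: (irr_sorted_eq ltn_trans ltnn (Pset i)).
      exact: (sorted_filter ltn_trans _ (iota_ltn_sorted 0 _)).
    move=> x; rewrite !mem_filter mem_iota add0n ltnS /=; by rewrite andbC.
  exact: filter_subseq.
have museg : forall i, mu (Bl i) E = mu (Bl i) (seg i).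
  move=> i; rewrite /mu big_seq_cond [RHS]big_seq_cond; apply: eq_bigl => p.
  case pin: (p \in Bl i) => //=.
  by rewrite mem_filter (keys i p.1 (map_f fst pin)).
have mub : forall i, 0 <= mu (Bl i) E <= 1.
  move=> i; have [_ _ _ _ [aB sB]] := Bavg i; rewrite -sB; exact: mu_bounds.
have badstep : forall i k, (k <= K)%N -> ~ D G k.+1 (P i) -> d2 < mu (Bl i) E ->
    ~ D G k (P i.+1).
  move=> i k kK nD bad hD.
  have X := Nsmall i _ (Lmem (T i) G (P i) k inG (Piota i) kK) (seg i).
  have : mu (Bl i) (seg i) <= d2.
    apply: X; split => //.
    - exact: (sorted_filter ltn_trans _ sE).
    - by rewrite -Pstep.
    - by apply/allP => x; rewrite mem_filter => /andP [/andP []].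
    - by rewrite -Pstep.
  rewrite -museg => h; move: bad; rewrite ltNge h //.
have claim : forall k, (k <= K)%N -> forall m i, (i + m = N)%N -> ~ D G k.+1 (P i) ->
    (count (fun j => (d2 < mu (Bl j) E)%R) (iota i m) <= k)%N.
  elim=> [|k IHk] kK m; elim: m => [|m IHm] i // eq nD /=.
  - case bad: (d2 < mu (Bl i) E) => /=.
    + by exfalso; apply: (badstep i 0%N kK nD bad); exact: PG.
    + apply: IHm; first by rewrite -eq addSnnS.
      by move=> h; apply: nD; exact: Pher.
  - case bad: (d2 < mu (Bl i) E) => /=.
    + rewrite add1n ltnS; apply: (IHk (ltnW kK) m i.+1); first by rewrite -eq addSnnS.
      exact: badstep i k.+1 kK nD bad.
    + apply: IHm; first by rewrite -eq addSnnS.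
      by move=> h; apply: nD; exact: Pher.
have cnt : (count (fun j => (d2 < mu (Bl j) E)%R) (iota 0 N) <= K)%N.
  apply: (claim K (leqnn K) N 0%N (add0n N)) => h.
  exact: (HK G inG _ (Danti _ _ _ h)).
have Npr : (0 : R) < N%:R by rewrite ltr0n.
have -> : mu Lf E = (\sum_(i <- iota 0 N) mu (Bl i) E) / N%:R.
  rewrite /mu /Lf big_flatten big_map mulr_suml; apply: eq_bigr => i _.
  by rewrite /sc big_map /= -mulr_suml.
have hsum := @sum_bad R (fun i => mu (Bl i) E) d2 (iota 0 N) (ltW d2pos) mub.
rewrite size_iota in hsum.
have hc : ((count (fun j => (d2 < mu (Bl j) E)%R) (iota 0 N))%:R <= (K%:R : R)) by rewrite ler_nat.
have HN' : K%:R <= d2 * N%:R by rewrite -ler_pdivrMr.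
have ed : delta = d2 * 2 by rewrite /d2 mulfVK.
rewrite ler_pdivrMr //; apply: (le_trans hsum); rewrite ed.
have -> : d2 * 2 * N%:R = d2 * N%:R + N%:R * d2 by ring.
apply: lerD => //; exact: le_trans hc HN'.
Qed.

End Succ.

Local Open Scope classical_set_scope.

Section Final.
Variable R : realType.

Lemma P_all (sq : ord -> nat -> ord) (S : ord -> seq nat -> Prop) :
  Schreier_system sq S -> forall eta, @Pprop R S eta.
Proof.
move=> HS; elim=> [|z IH|f IH].
- exact: (@P_zero R sq S HS).
- exact: (@P_succ R sq S HS z IH).
- exact: (@P_lim R sq S HS f IH).
Qed.

Lemma eventually_le (w : nat -> R) (e : R) : w @ \oo --> 0 -> 0 < e ->
  exists N, forall n, (N <= n)%N -> w n <= e.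
Proof.
move=> hw e0; have := (fst (cvgrPdist_le _ _) hw) e e0.
move=> /(_ _) [N _ HN].
exists N => n Nn; have := HN n Nn; rewrite /= sub0r normrN => h.
exact: le_trans (ler_norm _) h.
Qed.

Lemma sum_basis (E : seq nat) n : uniq E ->
  \sum_(i <- E) basis_vec R n i = (n \in E)%:R.
Proof.
elim: E => [|x E IH] /=; first by rewrite big_nil.
move=> /andP [xE uE]; rewrite big_cons IH // inE /basis_vec.
have [exn|xn] := eqVneq x n.
- by subst x; rewrite (negbTE xE) addr0.
- by rewrite add0r.
Qed.

Lemma sum_abs_y (F : seq nat) (a : nat -> R) (m : nat -> nat) (E : seq nat) :
  uniq E -> (forall k, k \in F -> 0 <= a k) ->
  \sum_(i <- E) `|\sum_(k <- F) a k * basis_vec R (m k) i| =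
  \sum_(k <- F) a k * (m k \in E)%:R.
Proof.
move=> uE aF.
rewrite (eq_bigr (fun i => \sum_(k <- F) a k * basis_vec R (m k) i)); last first.
  move=> i _; apply/ger0_norm; rewrite big_seq; apply: sumr_ge0 => k kF.
  by apply: mulr_ge0; [exact: aF | rewrite /basis_vec; case: ifP].
rewrite exchange_big /=; apply: eq_bigr => k _.
by rewrite -mulr_sumr sum_basis.
Qed.

Lemma key_sum (L : seq (nat * R)) (g : nat -> R) : uniq (map fst L) ->
  \sum_(k <- map fst L) (\sum_(p <- L | p.1 == k) p.2) * g k = \sum_(p <- L) p.2 * g p.1.
Proof.
elim: L => [|[x c] L IH] /=; first by rewrite !big_nil.
move=> /andP [xL uL]; rewrite !big_cons /= eqxx.
have -> : \sum_(p <- L | p.1 == x) p.2 = 0.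
  rewrite big_seq_cond big1 // => p /andP [pL /eqP px].
  by exfalso; move: xL; rewrite -px (map_f fst pL).
rewrite addr0 -IH //; congr (_ + _).
rewrite [LHS]big_seq [RHS]big_seq; apply: eq_bigr => k kL.
rewrite big_cons /=; case: (eqVneq x k) => [xk|] //.
by exfalso; move: xL; rewrite xk kL.
Qed.

Lemma sup_ge0 (B : set R) : (forall r, B r -> 0 <= r) -> 0 <= sup B.
Proof.
move=> hB; case: (EM (has_sup B)) => [hs|hs]; last by rewrite sup_out.
case: (hs) => [[r Br] hu]; apply: le_trans (hB r Br) _.
exact: ub_le_sup.
Qed.

End Final.

Lemma pull_CB (m : nat -> nat) (Fj : family) a K : injective m ->
  CB_deriv (fun K : seq nat => is_set K /\ Fj (map m K)) a K -> CB_deriv Fj a (map m K).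
Proof.
move=> minj; elim: a K => [|a IH|f IH] K /=.
- by case.
- move=> [/IH h [K' [/IH h' [sub ne]]]]; split => //; exists (map m K'); split => //.
  split; first exact: map_subseq.
  by move=> /(inj_map minj).
- move=> h n; exact: IH.
Qed.

Theorem proposition3p7 (R : realType) (sq : ord -> nat -> ord)
  (S : ord -> seq nat -> Prop) (eta : ord) (Fs : nat -> seq nat -> Prop)
  (w : nat -> R) :
  Schreier_system sq S ->
  ord_lt OZ eta ->
  (forall j, regular (Fs j)) ->
  (forall j n, Fs j [:: n]) ->
  (forall j, CB_lt (Fs j) (ord_exp ord_omega eta)) ->
  (forall n, 0 < w n) ->
  w @ \oo --> 0 ->
  weakly_null_wrt (Z0norm w Fs) (@basis_vec R) (S eta).
Proof.
move=> HS eta0 reg sing cbF wpos wcvg.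
have [N1 HN1] := eventually_le wcvg (@ltr01 R).
pose Wb := 1 + \sum_(0 <= n < N1) w n.
have sumW0 : 0 <= \sum_(0 <= n < N1) w n.
  by apply: sumr_ge0 => n _; exact: ltW.
have Wb0 : 0 <= Wb by rewrite /Wb; lra.
have wle : forall j, w j <= Wb.
  move=> j; case: (leqP N1 j) => h.
  - have := HN1 j h; rewrite /Wb; lra.
  - rewrite /Wb (bigD1_seq j) /=; last exact: iota_uniq.
      have : 0 <= \sum_(i <- index_iota 0 N1 | i != j) w i.
        by apply: sumr_ge0 => n _; exact: ltW.
      lra.
    by rewrite mem_index_iota.
have regset : forall j E, Fs j E -> is_set E by move=> j E; case: (reg j) => + _ _ _; apply.
have reghd : forall j, hereditary (Fs j) by move=> j; case: (reg j).
have Fs0 : Fs 0%N [::].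
  apply: (reghd 0%N [:: 0%N]) => //; exact: sing.
split.
- exists Wb => n; rewrite /Z0norm; apply: ge_sup.
    exists (w 0%N * \sum_(i <- [::]) `|basis_vec R n i|); exists 0%N, [::]; split => //.
  move=> r [j [E [FE ->]]].
  have uE : uniq E := sorted_uniq ltn_trans ltnn (regset j E FE).
  rewrite (eq_bigr (fun i => basis_vec R n i)); last first.
    by move=> i _; apply/ger0_norm; rewrite /basis_vec; case: ifP.
  rewrite sum_basis //; apply: le_trans (wle j); case: (n \in E) => /=.
  + by rewrite mulr1.
  + by rewrite mulr0; exact: ltW.
- move=> m minc Hsm.
  move: Hsm; rewrite /l1_spreading_model.
  set A := [set r | _] => Ainf.
  have mlt : forall i j, (i < j)%N -> (m i < m j)%N.
    move=> i j; exact: (homo_ltn (r := fun a b => (a < b)%N) ltn_trans minc).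
  have minj : injective m.
    move=> i j e; case: (ltngtP i j) => // h.
    + by have := mlt _ _ h; rewrite e ltnn.
    + by have := mlt _ _ h; rewrite e ltnn.
  have msorted : forall K, sorted ltn K -> sorted ltn (map m K).
    move=> K sK; rewrite sorted_map; apply: sub_sorted sK => i j /=; exact: mlt.
  have hl : has_lbound A.
    exists 0 => r [F [y [_ _ ->]]]; apply: sup_ge0 => r' [j [E [_ ->]]].
    apply: mulr_ge0; [exact: ltW | by apply: sumr_ge0 => i _].
  pose eps := inf A / 2.
  have eps0 : 0 < eps by rewrite /eps; lra.
  have [J HJ] := eventually_le wcvg eps0.
  pose Gs := List.map (fun j => fun K : seq nat => is_set K /\ Fs j (map m K)) (iota 0 J).
  have Gin : forall G, List.In G Gs -> exists j, (j < J)%N /\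
      G = (fun K : seq nat => is_set K /\ Fs j (map m K)).
    move=> G /List.in_map_iff [j [<- /In_mem]]; rewrite mem_iota add0n => jJ; by exists j.
  have Gok : forall G, List.In G Gs -> fam_ok G.
    move=> G /Gin [j [_ ->]]; split; first by move=> K [].
    move=> K K' [sK FK] sK' sub; split => //.
    apply: (reghd j) FK _ (map_subseq m sub); exact: msorted.
  have Gcb : forall G, List.In G Gs -> forall K, ~ CB_deriv G (ord_exp ord_omega eta) K.
    move=> G /Gin [j [_ ->]] K h.
    have [b [blt hb]] := cbF j.
    apply: (hb (map m K)); apply: CB_anti (ord_lt_le blt) _; exact: pull_CB.
  pose delta := eps / (Wb + 1).
  have dpos : 0 < delta by rewrite /delta divr_gt0 //; lra.
  have [L [[SL sL nL _ [pL sumL]] smL]] := @P_all R sq S HS eta Gs Gok Gcb delta dpos 0%N.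
  pose F := map fst L.
  pose a := fun k => \sum_(p <- L | p.1 == k) p.2.
  pose y := fun i => \sum_(k <- F) a k * basis_vec R (m k) i.
  have uF : uniq F := sorted_uniq ltn_trans ltnn sL.
  have aF : forall k, k \in F -> 0 <= a k.
    move=> k _; rewrite /a big_seq_cond; apply: sumr_ge0 => p /andP [pL' _].
    by move/allP: pL => /(_ p pL').
  have rA : A (Z0norm w Fs y).
    exists F, y; split => //; exists a; split => //.
    have := key_sum (fun _ => 1) uF; rewrite /= => e.
    under eq_bigr => k _ do rewrite -[a k]mulr1.
    rewrite /F /a e -[RHS]sumL; apply: eq_bigr => p _; by rewrite mulr1.
  have ynorm : Z0norm w Fs y <= eps.
    apply: ge_sup.
      exists (w 0%N * \sum_(i <- [::]) `|y i|); exists 0%N, [::]; split => //.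
    move=> r [j [E [FE ->]]].
    have sE := regset j E FE.
    have uE : uniq E := sorted_uniq ltn_trans ltnn sE.
    rewrite sum_abs_y //.
    have ks := key_sum (fun k => (m k \in E)%:R) uF.
    rewrite /= in ks; rewrite /a ks.
    set mu0 := \sum_(p <- L) _.
    have mu01 : 0 <= mu0 <= 1.
      rewrite -sumL /mu0 !big_seq; apply/andP; split.
      + apply: sumr_ge0 => p pL'; move/allP: pL => /(_ p pL') p0.
        by apply: mulr_ge0 => //; case: (_ \in _).
      + apply: ler_sum => p pL'; move/allP: pL => /(_ p pL') p0.
        by case: (_ \in _); rewrite ?mulr1 ?mulr0.
    have w0 := ltW (wpos j).
    case: (leqP J j) => jJ.
    + have := HJ j jJ; move: mu01 => /andP [h1 h2].
      move=> wj; apply: le_trans wj; rewrite -[X in _ <= X]mulr1; exact: ler_wpM2l.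
    + pose K := [seq k <- F | m k \in E].
      have GK : List.In (fun K : seq nat => is_set K /\ Fs j (map m K)) Gs.
        apply/List.in_map_iff; exists j; split => //; apply/In_mem.
        by rewrite mem_iota add0n.
      have KG : is_set K /\ Fs j (map m K).
        have sK : is_set K := sorted_filter ltn_trans _ sL.
        split => //; apply: (reghd j) FE (msorted _ sK) _.
        have -> : map m K = [seq i <- E | i \in map m K].
          apply: (irr_sorted_eq ltn_trans ltnn (msorted _ sK)).
            exact: (sorted_filter ltn_trans _ sE).
          move=> x; rewrite mem_filter; case xK: (x \in map m K) => //=.
          move/mapP: xK => [k]; rewrite mem_filter => /andP [mkE _] ->.
          by rewrite mkE.
        exact: filter_subseq.
      have hmu := smL _ GK K KG.
      have -> : mu0 = mu L K.
        rewrite /mu0 /mu big_mkcond [RHS]big_mkcond !big_seq; apply: eq_bigr => p pL' /=.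
        rewrite mem_filter (map_f fst pL') andbT.
        by case: (_ \in _); rewrite ?mulr1 ?mulr0.
      have mu0' : 0 <= mu L K by apply: (andP (mu_bounds K pL)).1.
      have : w j * mu L K <= Wb * delta.
        apply: ler_pM => //; exact: wle.
      have : Wb * delta <= eps.
        rewrite /delta mulrA ler_pdivrMr; last lra.
        have : 0 <= eps := ltW eps0. nra.
      lra.
  have := ge_inf hl rA => hinf.
  have : inf A <= eps := le_trans hinf ynorm.
  rewrite /eps; lra.
Qed.
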